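(* Let $G$ be a countable discrete group and let $\{\omega_n:G\to U(H_n)\}_{n\geq1}$ be a sequence of unitary representations that separates the points of $G$. Then the left regular representation $\lambda_G$ is weakly contained in the set $\{\iota_G\}\cup\{\omega_{i_1}\otimes\cdots\otimes\omega_{i_n}: 1\leq i_1\leq\cdots\leq i_n,\ n\geq1\}$.
   Context: $\iota_G$ denotes the trivial representation of $G$; separating points means for each $s\neq e$ there is $n$ with $\omega_n(s)\neq1$. *)

(* Defs.v *)
From HB Require Import structures.
From mathcomp Require Import all_boot all_order all_algebra.
From mathcomp Require Import reals.
From mathcomp Require Import complex.
Set Implicit Arguments. Unset Strict Implicit. Unset Printing Implicit Defensive.
Import Order.TTheory GRing.Theory Num.Theory.
Local Open Scope ring_scope.
Local Open Scope complex_scope.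

Record hilbert (R : realType) := Hilbert {
  hspace :> lmodType R[i];
  ip : hspace -> hspace -> R[i];
  ipDZl : forall (a : R[i]) (x y z : hspace), ip (a *: x + y) z = a * ip x z + ip y z;
  ip_conj : forall x y : hspace, ip y x = (ip x y)^*;
  ip_ge0 : forall x : hspace, 0 <= ip x x;
  ip_eq0 : forall x : hspace, ip x x = 0 -> x = 0;
  ip_complete : forall u : nat -> hspace,
    (forall e : R, 0 < e -> exists N : nat, forall m n : nat, (N <= m)%N -> (N <= n)%N ->
        `|ip (u m - u n) (u m - u n)| < e%:C) ->
    exists x : hspace, forall e : R, 0 < e -> exists N : nat, forall n : nat, (N <= n)%N ->
        `|ip (u n - x) (u n - x)| < e%:C
}.
Arguments ip {R h}.

Definition dense_span (R : realType) (H : hilbert R) (A : H -> Prop) : Prop :=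
  forall (x : H) (e : R), 0 < e ->
    exists (m : nat) (c : 'I_m -> R[i]) (v : 'I_m -> H),
      (forall j, A (v j)) /\
      `|ip (x - \sum_(j < m) c j *: v j) (x - \sum_(j < m) c j *: v j)| < e%:C.

(* Unitary representations of a (discrete) group G on H: group homomorphism *)
(* into the linear maps preserving the inner product (these are then        *)
(* invertible, with inverse pi (g^-1), hence unitary).                       *)
Record urep (R : realType) (G : groupType) (H : hilbert R) := URep {
  rep_map :> G -> H -> H;
  rep_linear : forall (g : G) (a : R[i]) (x y : H),
      rep_map g (a *: x + y) = a *: rep_map g x + rep_map g y;
  rep_ip : forall (g : G) (x y : H), ip (rep_map g x) (rep_map g y) = ip x y;
  rep1 : forall x : H, rep_map 1%g x = x;
  repM : forall (g h : G) (x : H), rep_map (g * h)%g x = rep_map g (rep_map h x)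
}.

Definition coef (R : realType) (G : groupType) (H : hilbert R) (pi : urep G H)
  (xi : H) (g : G) : R[i] := ip (pi g xi) xi.

(* Weak containment (Fell): pi is weakly contained in the set S = {rs i}   *)
(* iff every diagonal coefficient of pi is a limit, uniformly on finite     *)
(* (= compact, G discrete) subsets of G, of finite sums of diagonal         *)
(* coefficients of representations in S.                                    *)
Definition weakly_contained (R : realType) (G : groupType) (Hp : hilbert R)
  (pi : urep G Hp) (I : Type) (Hs : I -> hilbert R) (rs : forall i, urep G (Hs i))
  : Prop :=
  forall (xi : Hp) (F : seq G) (e : R), 0 < e ->
    exists (m : nat) (idx : 'I_m -> I) (eta : forall j : 'I_m, Hs (idx j)),
      forall g : G, g \in F ->
        `|coef pi xi g - \sum_(j < m) coef (rs (idx j)) (eta j) g| < e%:C.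

(* A realization of the left regular representation lambda_G on l^2(G):     *)
(* a Hilbert space with an orthonormal family (delta_g) of dense span, and   *)
(* lambda(g) delta_h = delta_{gh}.  This determines lambda_G up to unitary   *)
(* equivalence.                                                              *)
Record regular_real (R : realType) (G : groupType) := RegularReal {
  reg_space : hilbert R;
  reg_delta : G -> reg_space;
  reg_delta_ip : forall g h : G, ip (reg_delta g) (reg_delta h) = (g == h)%:R;
  reg_dense : dense_span (fun x => exists g, x = reg_delta g);
  reg_rep : urep G reg_space;
  reg_rep_delta : forall g h : G, reg_rep g (reg_delta h) = reg_delta (g * h)%g
}.

Record trivial_real (R : realType) (G : groupType) := TrivialReal {
  triv_space : hilbert R;
  triv_vec : triv_space;
  triv_vec_ip : ip triv_vec triv_vec = 1;
  triv_dense : dense_span (fun x => x = triv_vec);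
  triv_rep : urep G triv_space;
  triv_rep_id : forall (g : G) (x : triv_space), triv_rep g x = x
}.

(* This determines the tensor product representation up to unitary equiv.  *)
Record tensor_real (R : realType) (G : groupType) (H : nat -> hilbert R)
  (om : forall n, urep G (H n)) (s : seq nat) := TensorReal {
  tens_space : hilbert R;
  tens : (forall k : 'I_(size s), H (nth 0%N s k)) -> tens_space;
  tens_ip : forall u v : (forall k : 'I_(size s), H (nth 0%N s k)),
      ip (tens u) (tens v) = \prod_(k < size s) ip (u k) (v k);
  tens_dense : dense_span (fun x => exists u, x = tens u);
  tens_rep : urep G tens_space;
  tens_rep_tens : forall (g : G) (u : forall k : 'I_(size s), H (nth 0%N s k)),
      tens_rep g (tens u) = tens (fun k => om (nth 0%N s k) g (u k))
}.

(* Index set of  {iota_G} U {omega_{i_1} (x) ... (x) omega_{i_n} : i_1 <= ... <= i_n, n >= 1}. *)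
Definition tensor_index : Type := option {s : seq nat | (s != [::]) && sorted leq s}.

Definition family_space (R : realType) (G : groupType) (H : nat -> hilbert R)
  (om : forall n, urep G (H n)) (T : trivial_real R G)
  (TR : forall s, tensor_real om s) (i : tensor_index) : hilbert R :=
  match i with
  | None => triv_space T
  | Some s => tens_space (TR (val s))
  end.

Definition family_rep (R : realType) (G : groupType) (H : nat -> hilbert R)
  (om : forall n, urep G (H n)) (T : trivial_real R G)
  (TR : forall s, tensor_real om s) (i : tensor_index) :
  urep G (family_space T TR i) :=
  match i with
  | None => triv_rep T
  | Some s => tens_rep (TR (val s))
  end.

(* Main.v *)
Require Import Defs.
From HB Require Import structures.
From mathcomp Require Import all_boot all_order all_algebra.
From mathcomp Require Import reals complex ring lra.
From Stdlib Require Import ClassicalEpsilon.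
Import Order.TTheory GRing.Theory Num.Theory.
Local Open Scope ring_scope.
Local Open Scope complex_scope.
Set Implicit Arguments. Unset Strict Implicit. Unset Printing Implicit Defensive.
Section HS.
Variables (R : realType) (H : hilbert R).
Local Open Scope complex_scope.
Implicit Types (x y z : H).
Lemma conjcD (a b : R[i]) : conjc (a + b) = conjc a + conjc b. Proof. exact: rmorphD. Qed.
Lemma conjcM (a b : R[i]) : conjc (a * b) = conjc a * conjc b. Proof. exact: rmorphM. Qed.
Lemma conjcN (a : R[i]) : conjc (- a) = - conjc a. Proof. exact: rmorphN. Qed.

Lemma ip0l z : ip (0 : H) z = 0.
Proof.
have := ipDZl 1 (0:H) 0 z; rewrite scaler0 addr0 mul1r.
by move=> /(congr1 (fun t => t - ip 0 z)); rewrite subrr addrK.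
Qed.
Lemma ipDl x y z : ip (x + y) z = ip x z + ip y z.
Proof. by have := ipDZl 1 x y z; rewrite scale1r mul1r. Qed.
Lemma ipZl a x z : ip (a *: x) z = a * ip x z.
Proof. by have := ipDZl a x 0 z; rewrite addr0 ip0l addr0. Qed.
Lemma ipDr x y z : ip z (x + y) = ip z x + ip z y.
Proof. by rewrite ip_conj ipDl conjcD -!ip_conj. Qed.
Lemma ipZr a x z : ip z (a *: x) = conjc a * ip z x.
Proof. by rewrite ip_conj ipZl conjcM -!ip_conj. Qed.
Lemma ip0r z : ip z (0 : H) = 0.
Proof. by rewrite ip_conj ip0l conjc0. Qed.
Lemma ipNl x z : ip (- x) z = - ip x z.
Proof. by rewrite -scaleN1r ipZl mulN1r. Qed.
Lemma ipNr x z : ip z (- x) = - ip z x.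
Proof. by rewrite -scaleN1r ipZr conjcN conjc1 mulN1r. Qed.
Lemma ipBl x y z : ip (x - y) z = ip x z - ip y z.
Proof. by rewrite ipDl ipNl. Qed.
Lemma ipBr x y z : ip z (x - y) = ip z x - ip z y.
Proof. by rewrite ipDr ipNr. Qed.
Lemma ip_suml I (r : seq I) (P : pred I) (F : I -> H) z :
  ip (\sum_(i <- r | P i) F i) z = \sum_(i <- r | P i) ip (F i) z.
Proof.
elim/big_rec2: _ => [|i a b _ <-]; first by rewrite ip0l.
by rewrite ipDl.
Qed.
Lemma ip_sumr I (r : seq I) (P : pred I) (F : I -> H) z :
  ip z (\sum_(i <- r | P i) F i) = \sum_(i <- r | P i) ip z (F i).
Proof.
elim/big_rec2: _ => [|i a b _ <-]; first by rewrite ip0r.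
by rewrite ipDr.
Qed.
Lemma ip_real x : conjc (ip x x) = ip x x.
Proof. by rewrite -ip_conj. Qed.
Lemma normip x : `|ip x x| = ip x x.
Proof. by rewrite ger0_norm // ip_ge0. Qed.
Lemma CS x y : `|ip x y| ^+ 2 <= ip x x * ip y y.
Proof.
have [/ip_eq0 ->|a0] := eqVneq (ip y y) 0.
  by rewrite ip0r ip0l normr0 expr0n /= mulr0.
set c := ip x y / ip y y.
have := ip_ge0 (x - c *: y).
rewrite !ipBl !ipBr !ipZl !ipZr.
have cc : conjc c = (ip y x) / ip y y.
  by rewrite /c conjcM conjc_inv ip_real -ip_conj.
rewrite cc sqr_normc -ip_conj /c.
set z := ip x y; set w := ip y x; set a := ip y y; set b := ip x x.
have -> : b - w / a * z - (z / a * w - z / a * (w / a * a)) = b - z * w / a.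
  by field.
rewrite subr_ge0 => h.
have a_gt0 : 0 < a by rewrite lt0r a0 ip_ge0.
by move: h; rewrite -(ler_pM2r a_gt0) divfK.
Qed.
End HS.
Section Rep.
Variables (R : realType) (G : groupType) (H : hilbert R) (pi : urep G H).
Lemma rep0 g : pi g 0 = 0.
Proof.
have := rep_linear pi g 1 0 0; rewrite scaler0 addr0 scale1r.
by move=> /(congr1 (fun t => t - pi g 0)); rewrite subrr addrK.
Qed.
Lemma repD g x y : pi g (x + y) = pi g x + pi g y.
Proof. by have := rep_linear pi g 1 x y; rewrite !scale1r. Qed.
Lemma repZ g a x : pi g (a *: x) = a *: pi g x.
Proof. by have := rep_linear pi g a x 0; rewrite !addr0 rep0 addr0. Qed.
Lemma repB g x y : pi g (x - y) = pi g x - pi g y.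
Proof. by rewrite repD -scaleN1r repZ scaleN1r. Qed.
Lemma rep_sum g I (r : seq I) (P : pred I) (F : I -> H) :
  pi g (\sum_(i <- r | P i) F i) = \sum_(i <- r | P i) pi g (F i).
Proof.
elim/big_rec2: _ => [|i a b _ <-]; first by rewrite rep0.
by rewrite repD.
Qed.
Lemma coef_trans m (c : 'I_m -> R[i]) (a : 'I_m -> G) (eta : H) g :
  coef pi (\sum_(l < m) c l *: pi (a l) eta) g =
  \sum_(l < m) \sum_(l' < m) c l * conjc (c l') * coef pi eta ((a l')^-1 * g * a l)%g.
Proof.
rewrite /coef rep_sum ip_suml; apply: eq_bigr => l _.
rewrite ip_sumr; apply: eq_bigr => l' _.
rewrite repZ ipZl ipZr mulrA; congr (_ * _).
rewrite -repM.
have -> : (g * a l)%g = (a l' * ((a l')^-1 * g * a l))%g by rewrite -!mulgA mulVKg.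
by rewrite repM rep_ip.
Qed.
Lemma coefZ a x g : coef pi (a *: x) g = a * conjc a * coef pi x g.
Proof. by rewrite /coef repZ ipZl ipZr mulrA. Qed.
End Rep.
Section Fam.
Variables (R : realType) (G : groupType) (H : nat -> hilbert R)
  (om : forall n : nat, urep G (H n)) (T : trivial_real R G)
  (TR : forall s : seq nat, tensor_real om s).

Definition castH (m : nat) (y : {n : nat & H n}) : H m :=
  match projT1 y =P m with
  | ReflectT e => eq_rect _ H (projT2 y) _ e
  | ReflectF _ => 0
  end.
Lemma castHE y : castH (projT1 y) y = projT2 y.
Proof.
rewrite /castH; case: (projT1 y =P projT1 y) => [e|//].
by rewrite (eq_irrelevance e (erefl _)).
Qed.

Variable y : nat -> {n : nat & H n}.
Definition key t := projT1 (y t).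

Definition famE (L : seq nat) : {i : tensor_index & family_space T TR i} :=
  match (insub (map key L) : option {s : seq nat | (s != [::]) && sorted leq s}) with
  | Some sS => existT (fun i => family_space T TR i) (Some sS)
      (tens (TR (val sS)) (fun k => castH (nth 0%N (val sS) k) (y (nth 0%N L k))))
  | None => existT (fun i => family_space T TR i) None (triv_vec T)
  end.

Lemma coef_famE L g : sorted leq (map key L) ->
  coef (family_rep T TR (tag (famE L))) (tagged (famE L)) g =
  \prod_(t <- L) coef (om (key t)) (projT2 (y t)) g.
Proof.
move=> sL; rewrite /famE; case: insubP => [sS HS eS | HN] /=.
  rewrite /coef tens_rep_tens tens_ip.
  have eS2 : sval sS = map key L := eS; move: (sval sS) eS2 => s ->.
  rewrite (big_nth 0%N) big_mkord size_map; apply: eq_bigr => k _.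
  by rewrite (nth_map 0%N) // /key castHE.
move: HN; rewrite sL andbT negbK => /eqP.
case: L sL => // _ _; rewrite big_nil /coef triv_rep_id.
exact: triv_vec_ip.
Qed.

Definition Lf r N (f : {ffun 'I_r -> 'I_N}) : seq nat :=
  sort (relpre key leq) (flatten [seq nseq (f t).+1 (val t) | t <- enum 'I_r]).
Lemma sorted_Lf r N (f : {ffun 'I_r -> 'I_N}) : sorted leq (map key (Lf f)).
Proof. by rewrite sorted_map; apply: sort_sorted => a b; apply: leq_total. Qed.
Lemma prod_Lf r N (f : {ffun 'I_r -> 'I_N}) (F : nat -> R[i]) :
  \prod_(t <- Lf f) F t = \prod_(t : 'I_r) F t ^+ (f t).+1.
Proof.
rewrite /Lf (perm_big _ (permEl (perm_sort _ _))) big_flatten big_map big_enum /=.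
by apply: eq_bigr => t _; rewrite big_cons big_nseq iter_mulr_1 exprS.
Qed.
End Fam.
Section Close.
Variables (R : realType) (G : groupType) (Hh : hilbert R) (pi : urep G Hh).
Lemma amgm (u v : Hh) (t : R[i]) : 0 < t ->
  2 * `|ip u v| <= t * ip u u + t^-1 * ip v v.
Proof.
move=> t0; have := CS u v.
set z := `|ip u v|; set a := ip u u; set b := ip v v => h.
have a0 : 0 <= a := ip_ge0 u.
have b0 : 0 <= b := ip_ge0 v.
have s0 : 0 <= t * a + t^-1 * b by rewrite addr_ge0 // mulr_ge0 // ?invr_ge0 ltW.
rewrite -(ler_pXn2r (n := 2)) // ?nnegrE ?mulr_ge0 //.
have tn0 : t != 0 by rewrite gt_eqF.
have -> : (t * a + t^-1 * b) ^+ 2 = (t * a - t^-1 * b) ^+ 2 + 4 * (a * b).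
  by field.
rewrite exprMn -[X in X <= _]add0r; apply: lerD.
  by rewrite real_exprn_even_ge0 // rpredB // ger0_real // mulr_ge0 // ?invr_ge0 ltW.
have -> : (2 : R[i]) ^+ 2 = 4 by rewrite -natrX.
by rewrite ler_wpM2l.
exact: normr_ge0.
Qed.
Lemma coef_close (xi : Hh) (e : R) : 0 < e -> exists d : R, 0 < d /\
  forall xi' : Hh, `|ip (xi - xi') (xi - xi')| < d%:C ->
    forall g, `|coef pi xi g - coef pi xi' g| < e%:C.
Proof.
move=> e0.
set A := ip xi xi.
have A0 : 0 <= A := ip_ge0 xi.
have Ar : A = (complex.Re A)%:C by rewrite RRe_real // ger0_real.
set a := complex.Re A.
have a0 : 0 <= a by move: A0; rewrite Ar ler0c.
pose t := e / (3 * (a + 1)).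
have a1 : 0 < a + 1 by rewrite ltr_wpDl.
have t0 : 0 < t by rewrite divr_gt0 // mulr_gt0.
have ti0 : 0 < 1 + t^-1 by rewrite addr_gt0 // invr_gt0.
pose d := e / 3 / (1 + t^-1).
have d0 : 0 < d by rewrite !divr_gt0.
exists d; split => // xi' hD g.
have [dd Edd] : exists dd, xi' = xi - dd.
  by exists (xi - xi'); rewrite opprB addrCA subrr addr0.
have E2 : xi - (xi - dd) = dd by rewrite opprB addrCA subrr addr0.
rewrite Edd E2 in hD *.
set D := ip dd dd.
have D0 : 0 <= D := ip_ge0 dd.
rewrite /coef repB ipBl !ipBr.
set X := ip (pi g xi) dd; set Y := ip (pi g dd) xi; set Z := ip (pi g dd) dd.
have -> : ip (pi g xi) xi - (ip (pi g xi) xi - X - (Y - Z)) = X + Y - Z by ring.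
have tc0 : 0 < t%:C by rewrite ltcR.
have hX : 2 * `|X| <= t%:C * A + t%:C^-1 * D.
  by have := amgm (pi g xi) dd tc0; rewrite rep_ip.
have hY : 2 * `|Y| <= t%:C^-1 * D + t%:C * A.
  have ti : 0 < t%:C^-1 by rewrite invr_gt0.
  by have := amgm (pi g dd) xi ti; rewrite rep_ip invrK.
have hZ : 2 * `|Z| <= D + D.
  by have := amgm (pi g dd) dd ltr01; rewrite rep_ip invr1 !mul1r.
have key : `|X + Y - Z| <= t%:C * A + (1 + t%:C^-1) * D.
  apply: le_trans (ler_normB _ _) _; apply: le_trans (lerD (ler_normD _ _) (lexx _)) _.
  rewrite -(ler_pM2l (_ : 0 < 2)) ?ltr0n //.
  apply: le_trans (_ : (t%:C * A + t%:C^-1 * D) + (t%:C^-1 * D + t%:C * A) + (D + D) <= _).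
    by rewrite !mulrDr; apply: lerD => //; apply: lerD.
  by rewrite le_eqVlt; apply/orP; left; apply/eqP; ring.
apply: le_lt_trans key _.
have h1 : t%:C * A <= (e/3)%:C.
  rewrite Ar -rmorphM lecR /t -/a.
  have an : a + 1 != 0 by rewrite gt_eqF.
  have -> : e / (3 * (a + 1)) * a = e / 3 * (a / (a + 1)) by field.
  by rewrite ler_piMr ?divr_ge0 ?ltW // ltr_pdivrMr // mul1r ltrDl.
have h2 : (1 + t%:C^-1) * D < (e/3)%:C.
  have -> : (e/3)%:C = (1 + t%:C^-1) * d%:C.
    rewrite -(fmorphV (real_complex R)) -(rmorph1 (real_complex R)) -rmorphD -rmorphM /d; congr (_%:C).
    by rewrite [RHS]mulrC divfK // gt_eqF.
  have ti0c : 0 < 1 + t%:C^-1 by rewrite -(fmorphV (real_complex R)) -(rmorph1 (real_complex R)) -rmorphD ltcR.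
  by rewrite ltr_pM2l // -[D]normip.
apply: lt_le_trans (ler_ltD h1 h2) _.
rewrite -rmorphD lecR.
lra.
Qed.
End Close.
Section Geo.
Variable C : numFieldType.
Definition Sav N (z : C) := N%:R^-1 * \sum_(i < N) z ^+ i.+1.
Lemma Sav1 N : (0 < N)%N -> Sav N 1 = 1.
Proof.
move=> N0; rewrite /Sav (eq_bigr (fun _ => 1)) => [|i _]; last by rewrite expr1n.
by rewrite sumr_const card_ord mulVf // pnatr_eq0 -lt0n.
Qed.
Lemma geo N (z : C) : (\sum_(i < N) z ^+ i.+1) * (1 - z) = z - z ^+ N.+1.
Proof.
elim: N => [|N IH]; first by rewrite big_ord0 mul0r subrr.
rewrite big_ord_recr /= mulrDl IH [in RHS]exprS; ring.
Qed.
Lemma Sav_le1 N (z : C) : `|z| <= 1 -> `|Sav N z| <= 1.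
Proof.
move=> z1; rewrite /Sav normrM.
case: N => [|N]; first by rewrite big_ord0 normr0 mulr0.
rewrite normfV normr_nat ler_pdivrMl ?ltr0n // mulr1.
apply: le_trans (ler_norm_sum _ _ _) _.
have -> : N.+1%:R = \sum_(i < N.+1) (1 : C) by rewrite sumr_const card_ord.
apply: ler_sum => i _.
by rewrite normrX exprn_ile1.
Qed.
Lemma Sav_small N (z : C) : (0 < N)%N -> `|z| <= 1 ->
  `|Sav N z| * (N%:R * `|1 - z|) <= 2.
Proof.
move=> N0 z1; rewrite -normr_nat -!normrM /Sav.
have NZ : (N%:R : C) != 0 by rewrite pnatr_eq0 -lt0n.
have -> : N%:R^-1 * (\sum_(i < N) z ^+ i.+1) * (N%:R * (1 - z)) =
   (\sum_(i < N) z ^+ i.+1) * (1 - z) by field.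
rewrite geo; apply: le_trans (ler_normB _ _) _.

rewrite normrX -[2]/(1 + 1); apply: lerD => //.
exact: exprn_ile1.
Qed.
Lemma Sav_prod r N (Phi : 'I_r -> C) :
  N%:R^-1 ^+ r * \sum_(f : {ffun 'I_r -> 'I_N}) \prod_t Phi t ^+ (f t).+1 =
  \prod_t Sav N (Phi t).
Proof.
rewrite /Sav big_split /= prodr_const card_ord; congr (_ * _).
by rewrite (bigA_distr_bigA (fun t (i : 'I_N) => Phi t ^+ i.+1)).
Qed.
End Geo.
Lemma conjc_ge0 (R : realType) (c : R[i]) : 0 <= c -> conjc c = c.
Proof. by move=> h; have := geC0_conj h. Qed.
Lemma fin_bound (P : nat -> nat -> Prop) r :
  (forall t, (t < r)%N -> exists N, forall N', (N <= N')%N -> P t N') ->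
  exists N, forall t, (t < r)%N -> forall N', (N <= N')%N -> P t N'.
Proof.
elim: r => [|r IH] h; first by exists 0%N.
have [N1 H1] := IH (fun t lt => h t (ltnW lt)).
have [N2 H2] := h r (ltnSn r).
exists (maxn N1 N2) => t; rewrite ltnS leq_eqVlt => /orP[/eqP->|lt] N' le.
  by apply: H2; apply: leq_trans le; apply: leq_maxr.
by apply: H1 => //; apply: leq_trans le; apply: leq_maxl.
Qed.
Lemma archi_C (R : realType) (e : R) (d : R[i]) : 0 < e -> 0 < d ->
  exists N, forall N', (N <= N')%N -> 2 < e%:C * (N'%:R * d).
Proof.
move=> e0 d0.
have dr : d = (complex.Re d)%:C by rewrite RRe_real // gtr0_real.
have rd0 : 0 < complex.Re d by rewrite dr ltcR in d0.
have b0 : 0 <= 2 / (e * complex.Re d) by rewrite divr_ge0 // mulr_ge0 // ltW.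
exists (Num.bound (2 / (e * complex.Re d))) => N' le.
have := archi_boundP b0; rewrite ltr_pdivrMr ?mulr_gt0 // => h.
have -> : (2 : R[i]) = (2 : R)%:C by rewrite rmorph_nat.
rewrite dr -(rmorph_nat (real_complex R) N') -!rmorphM ltcR.
apply: lt_le_trans h _.
rewrite mulrCA; apply: ler_wpM2l; first exact: ltW.
apply: ler_wpM2r; first exact: ltW.
by rewrite ler_nat.
Qed.
Section Main.
Variables (R : realType) (G : groupType) (H : nat -> hilbert R)
  (om : forall n : nat, urep G (H n)) (T : trivial_real R G)
  (TR : forall s : seq nat, tensor_real om s).
Hypothesis om_separates : forall s : G, s <> 1%g -> exists (n : nat) (x : H n), om n s x <> x.

Lemma exists_Y : exists Y : G -> {n : nat & H n}, forall b, b != 1%g ->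
  ip (projT2 (Y b)) (projT2 (Y b)) = 1 /\ om (projT1 (Y b)) b (projT2 (Y b)) <> projT2 (Y b).
Proof.
have ex : forall b : G, exists y : {n : nat & H n}, b != 1%g ->
  ip (projT2 y) (projT2 y) = 1 /\ om (projT1 y) b (projT2 y) <> projT2 y.
  move=> b; have [->|nb] := eqVneq b 1%g.
    by exists (existT (fun n => H n) 0%N (0 : H 0%N)).
  have [n [x hx]] := om_separates (elimN eqP nb).
  have x0 : x != 0 by apply/eqP => ex0; apply: hx; rewrite ex0 rep0.
  have a0 : ip x x != 0 by apply: contra_neq x0 => /ip_eq0.
  have age0 : 0 <= ip x x := ip_ge0 x.
  set c := (sqrtc (ip x x))^-1.
  have c0 : c != 0 by rewrite invr_eq0 sqrtc_eq0.
  have cge0 : 0 <= c by rewrite invr_ge0 sqrtc_ge0.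
  exists (existT _ n (c *: x)) => _ /=; split.
    rewrite ipZl ipZr conjc_ge0 // mulrA -expr2 exprVn sqr_sqrtc mulVf //.
  rewrite repZ => /(congr1 (fun v => c^-1 *: v)); rewrite !scalerA mulVf // !scale1r.
  exact: hx.
exists (fun b => proj1_sig (constructive_indefinite_description _ (ex b))) => b.
exact: (proj2_sig (constructive_indefinite_description _ (ex b))).
Qed.

Lemma approx_delta (B : seq G) (e : R) : 0 < e ->
  exists m (idx : 'I_m -> tensor_index) (eta : forall j, family_space T TR (idx j)),
    forall b, b \in B ->
      `|\sum_(j < m) coef (family_rep T TR (idx j)) (eta j) b - (b == 1%g)%:R| < e%:C.
Proof.
move=> e0.
have [Y HY] := exists_Y.
set F0 := [seq b <- B | b != 1%g].
set r := size F0.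
pose y t := Y (nth 1%g F0 t).
pose Phi t g := coef (om (key y t)) (projT2 (y t)) g.
have nth1 : forall t, (t < r)%N -> nth 1%g F0 t != 1%g.
  by move=> t lt; have := mem_nth 1%g lt; rewrite mem_filter => /andP[].
have Phi1 : forall t, (t < r)%N -> Phi t 1%g = 1.
  by move=> t lt; rewrite /Phi /coef rep1; case: (HY _ (nth1 t lt)).
have Phile : forall t g, (t < r)%N -> `|Phi t g| <= 1.
  move=> t g lt; case: (HY _ (nth1 t lt)) => h1 _.
  have := CS (om (key y t) g (projT2 (y t))) (projT2 (y t)).
  rewrite rep_ip -/(y t) h1 mulr1 -[X in _ <= X](expr1n _ 2).
  by rewrite ler_pXn2r // ?nnegrE.
have Phine : forall t, (t < r)%N -> Phi t (nth 1%g F0 t) != 1.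
  move=> t lt; case: (HY _ (nth1 t lt)) => h1 h2.
  apply/eqP => h; apply: h2; apply/eqP; rewrite -subr_eq0; apply/eqP/ip_eq0.
  move: h; rewrite /Phi /coef; set u := om _ _ _; set x := projT2 _ => h.
  rewrite !ipBl !ipBr /u rep_ip -/u h1 (ip_conj u x) h conjc1.
  by rewrite !subrr.
have [N0 HN0] : exists N0, forall t, (t < r)%N -> forall N', (N0 <= N')%N ->
    2 < e%:C * (N'%:R * `|1 - Phi t (nth 1%g F0 t)|).
  apply: fin_bound => t lt; apply: archi_C => //.
  by rewrite normr_gt0 subr_eq0 eq_sym Phine.
pose N := maxn 1 N0.
have N_gt0 : (0 < N)%N by rewrite leq_max.
have HN : forall t, (t < r)%N -> 2 < e%:C * (N%:R * `|1 - Phi t (nth 1%g F0 t)|).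
  by move=> t lt; apply: HN0 => //; rewrite leq_maxr.
pose al : R[i] := sqrtc (N%:R^-1 ^+ r).
have alE : al * conjc al = N%:R^-1 ^+ r.
  by rewrite conjc_ge0 ?sqrtc_ge0 ?exprn_ge0 ?invr_ge0 // -expr2 sqr_sqrtc.
pose E (f : {ffun 'I_r -> 'I_N}) := famE T TR y (Lf y f).
exists #|{ffun 'I_r -> 'I_N}|.
exists (fun j => tag (E (enum_val j))).
exists (fun j => al *: tagged (E (enum_val j))).
have psiE : forall g, \sum_(j < #|{ffun 'I_r -> 'I_N}|)
   coef (family_rep T TR (tag (E (enum_val j)))) (al *: tagged (E (enum_val j))) g =
   \prod_(t < r) Sav N (Phi t g).
  move=> g.
  rewrite -(big_enum_val (fun f => coef (family_rep T TR (tag (E f))) (al *: tagged (E f)) g)).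
  rewrite -(Sav_prod N (fun t : 'I_r => Phi t g)) -alE mulr_sumr.
  apply: eq_bigr => f _.
  by rewrite coefZ coef_famE ?sorted_Lf // prod_Lf.
move=> b bB; rewrite psiE.
have [->|nb] := eqVneq b 1%g.
  rewrite big1 => [|t _]; last by rewrite Phi1 ?Sav1.
  by rewrite subrr normr0 ltcE /= eqxx e0.
have bF0 : b \in F0 by rewrite mem_filter nb.
pose t0 := Ordinal (etrans (index_mem b F0) bF0).
have bt : nth 1%g F0 t0 = b := nth_index 1%g bF0.
rewrite subr0 normr_prod (bigD1 t0) //=.
have h1 : `|Sav N (Phi t0 b)| < e%:C.
  have D0 : 0 < N%:R * `|1 - Phi t0 b|.
    rewrite mulr_gt0 ?ltr0n // normr_gt0 subr_eq0 eq_sym -bt.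
    exact: Phine.
  rewrite -(ltr_pM2r D0); apply: le_lt_trans (Sav_small _ _) _ => //.
    exact: Phile.
  by have := HN t0 (ltn_ord t0); rewrite bt.
have h2 : \prod_(t < r | t != t0) `|Sav N (Phi t b)| <= 1.
  apply: prodr_ile1 => t _; rewrite normr_ge0 /=.
  exact/Sav_le1/Phile.
apply: le_lt_trans h1; rewrite -[X in _ <= X]mulr1.
by apply: ler_wpM2l.
Qed.
End Main.

Theorem proposition3p7 (R : realType) (G : groupType)
  (G_countable : exists f : G -> nat, injective f)
  (H : nat -> hilbert R) (om : forall n : nat, urep G (H n))
  (om_separates : forall s : G, s <> 1%g -> exists (n : nat) (x : H n), om n s x <> x)
  (L : regular_real R G) (T : trivial_real R G)
  (TR : forall s : seq nat, tensor_real om s) :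
  weakly_contained (reg_rep L) (family_rep T TR).
Proof.
move=> xi F e e0.
have e2 : 0 < e / 2 by rewrite divr_gt0.
have [d [d0 hd]] := coef_close (reg_rep L) xi e2.
have [M [c [v [Hv Hd]]]] := @reg_dense _ _ L xi _ d0.
pose a (j : 'I_M) : G := proj1_sig (constructive_indefinite_description _ (Hv j)).
have va : forall j, v j = reg_delta L (a j).
  by move=> j; exact: (proj2_sig (constructive_indefinite_description _ (Hv j))).
have cr : forall l, `|c l| = (complex.Re `|c l|)%:C.
  by move=> l; rewrite RRe_real // normr_real.
pose kr := \sum_(l < M) complex.Re `|c l|.
have kr0 : 0 <= kr.
  by apply: sumr_ge0 => l _; have := normr_ge0 (c l); rewrite cr ler0c.
have krE : \sum_(l < M) `|c l| = kr%:C.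
  by rewrite rmorph_sum; apply: eq_bigr => l _; exact: cr.
have k1 : 0 < kr * kr + 1 by rewrite ltr_wpDl // mulr_ge0.
pose e' := e / 2 / (kr * kr + 1).
have e'0 : 0 < e' by rewrite divr_gt0.
pose B := flatten [seq [seq ((a l')^-1 * g * a l)%g | l <- enum 'I_M, l' <- enum 'I_M] | g <- F].
have [m [idx [eta0 Heta]]] := approx_delta T TR om_separates B e'0.
exists m, idx, (fun j => \sum_(l < M) c l *: family_rep T TR (idx j) (a l) (eta0 j)).
move=> g gF.
have xi'E : \sum_(j < M) c j *: v j = \sum_(l < M) c l *: reg_rep L (a l) (reg_delta L 1%g).
  by apply: eq_bigr => l _; rewrite va reg_rep_delta mulg1.
have hc := hd _ Hd g.
rewrite xi'E coef_trans in hc.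
under eq_bigr do rewrite coef_trans.
rewrite exchange_big /=.
under eq_bigr do rewrite exchange_big /=.
set P := \sum_(l < M) \sum_(l' < M) _ in hc.
set Q := \sum_(l < M) _.
have hPQ : `|P - Q| <= (e / 2)%:C.
  rewrite /P /Q -sumrB.
  apply: le_trans (ler_norm_sum _ _ _) _.
  apply: le_trans (_ : \sum_(l < M) \sum_(l' < M) `|c l| * `|c l'| * e'%:C <= _).
    apply: ler_sum => l _; rewrite -sumrB.
    apply: le_trans (ler_norm_sum _ _ _) _.
    apply: ler_sum => l' _; rewrite -mulr_sumr -mulrBr normrM normrM normcJ.
    apply: ler_wpM2l; first by rewrite mulr_ge0.
    set b := ((a l')^-1 * g * a l)%g.
    have bB : b \in B.
      apply/flattenP; exists [seq ((a l')^-1 * g * a l)%g | l <- enum 'I_M, l' <- enum 'I_M].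
        exact: map_f.
      by apply: allpairs_f; rewrite mem_enum.
    have := Heta b bB; rewrite distrC => /ltW.
    suff -> : coef (reg_rep L) (reg_delta L 1%g) b = (b == 1%g)%:R by [].
    by rewrite /coef reg_rep_delta mulg1 reg_delta_ip.
  have -> : \sum_(l < M) \sum_(l' < M) `|c l| * `|c l'| * e'%:C =
      (\sum_(l < M) `|c l|) * ((\sum_(l' < M) `|c l'|) * e'%:C).
    rewrite mulr_suml; apply: eq_bigr => l _.
    by rewrite mulr_suml mulr_sumr; apply: eq_bigr => l' _; rewrite mulrA.
  rewrite krE -!rmorphM lecR /e' mulrA.
  have kn : kr * kr + 1 != 0 by rewrite gt_eqF.
  have -> : kr * kr * (e / 2 / (kr * kr + 1)) = e / 2 * (kr * kr / (kr * kr + 1)) by field.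
  by rewrite ler_piMr ?divr_ge0 ?ltW // ltr_pdivrMr // mul1r ltrDl.
have -> : coef (reg_rep L) xi g - Q = (coef (reg_rep L) xi g - P) + (P - Q).
  by rewrite addrA subrK.
apply: le_lt_trans (ler_normD _ _) _.
have -> : e%:C = (e / 2)%:C + (e / 2)%:C by rewrite -rmorphD -splitr.
exact: ltr_leD.
Qed.
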